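(* Let $c>0$ be a constant and $G=G_{n,c/n}$ with vertex set $V=[n]$. Let $b_0=\ln^{1/4}n$ and $V_0=\{v\in V:\deg(v)\ge b_0\}$. Then with high probability there is no set $S\subseteq V_0$ with $|S|\ge \ln^{7/8}n$ such that $G^5[S]$ is connected.
   Context: For a graph $G$ and integer $i\ge1$, $G^i$ is the graph on $V(G)$ in which $u\ne v$ are adjacent iff $d_G(u,v)\le i$. ''With high probability'' means with probability $\to1$ as $n\to\infty$. *)

(* Defs.v *)
From HB Require Import structures.
From mathcomp Require Import all_boot.
From Stdlib Require Import Reals.

Set Implicit Arguments.
Unset Strict Implicit.
Unset Printing Implicit Defensive.

(* A simple graph on vertex set [n] = 'I_n: the entry g (u,v) for u < v
   records whether {u,v} is an edge; entries with u >= v are irrelevant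
   (and get probability weight forcing them to false, see edge_weight). *)
Definition graph (n : nat) := {ffun 'I_n * 'I_n -> bool}.

Definition adj (n : nat) (g : graph n) (u v : 'I_n) : bool :=
  (u != v) && (if (u < v)%N then g (u, v) else g (v, u)).

Definition deg (n : nat) (g : graph n) (v : 'I_n) : nat :=
  #|[set w | adj g v w]|.

Fixpoint ball (n : nat) (g : graph n) (k : nat) (u : 'I_n) : {set 'I_n} :=
  match k with
  | 0 => [set u]
  | k'.+1 => let B := ball g k' u in
             B :|: [set y | [exists x in B, adj g x y]]
  end.

Definition gpow (n : nat) (g : graph n) (i : nat) (u v : 'I_n) : bool :=
  (u != v) && (v \in ball g i u).

Definition induced_connected (n : nat) (r : rel 'I_n) (S : {set 'I_n}) : bool :=
  [forall u in S, forall v in S,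
     connect (fun x y => [&& x \in S, y \in S & r x y]) u v].

Definition Rleb (x y : R) : bool := if Rle_dec x y then true else false.

Definition b0 (n : nat) : R := Rpower (ln (INR n)) (1/4).

Definition V0 (n : nat) (g : graph n) : {set 'I_n} :=
  [set v | Rleb (b0 n) (INR (deg g v))].

Definition bad_set (n : nat) (g : graph n) (S : {set 'I_n}) : bool :=
  [&& S \subset V0 g,
      Rleb (Rpower (ln (INR n)) (7/8)) (INR #|S|)
    & induced_connected (gpow g 5) S].

Definition edge_weight (n : nat) (p : R) (g : graph n) (e : 'I_n * 'I_n) : R :=
  if (e.1 < e.2)%N then (if g e then p else 1 - p)%R
  else (if g e then 0 else 1)%R.

Definition weight (n : nat) (p : R) (g : graph n) : R :=
  foldr Rmult 1%R (map (edge_weight p g) (enum [set: 'I_n * 'I_n])).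

Definition gnp_prob (n : nat) (p : R) (E : pred (graph n)) : R :=
  foldr Rplus 0%R (map (weight p) (filter E (enum [set: graph n]))).

(* Main.v *)
Require Import Defs.
From HB Require Import structures.
From mathcomp Require Import all_boot all_algebra.
From Stdlib Require Import Reals Lra Lia ZArith.
From mathcomp Require Import Rstruct zify.
Set Implicit Arguments. Unset Strict Implicit. Unset Printing Implicit Defensive.

Open Scope R_scope.

Lemma Rsum_le (I : finType) (P : pred I) (F G : I -> R) :
  (forall i, P i -> F i <= G i) ->
  \big[Rplus/0]_(i | P i) F i <= \big[Rplus/0]_(i | P i) G i.
Proof. move=> H; apply: (big_ind2 (fun a b => a <= b)) => //; [lra|]. 
move=> *; lra. Qed.

Lemma Rsum_ge0 (I : finType) (P : pred I) (F : I -> R) :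
  (forall i, P i -> 0 <= F i) -> 0 <= \big[Rplus/0]_(i | P i) F i.
Proof. move=> H; apply: (big_ind (fun a => 0 <= a)) => //; [lra|]. move=> *; lra. Qed.

Lemma Rprod_ge0 (I : finType) (P : pred I) (F : I -> R) :
  (forall i, P i -> 0 <= F i) -> 0 <= \big[Rmult/1]_(i | P i) F i.
Proof. move=> H; apply: (big_ind (fun a => 0 <= a)) => //; [lra|]. 
move=> *; apply Rmult_le_pos => //. Qed.

Lemma Rsum_ge_term (I : finType) (F : I -> R) i0 :
  (forall i, 0 <= F i) -> F i0 <= \big[Rplus/0]_i F i.
Proof. move=> H; rewrite (bigD1 i0) //=.
have := @Rsum_ge0 _ (fun i => i != i0) F (fun i _ => H i); lra. Qed.

Lemma Rsum_const (I : finType) (P : pred I) (a : R) :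
  \big[Rplus/0]_(i | P i) a = INR #|P| * a.
Proof. rewrite big_const; elim: #|P| => [|m IH]; first by simpl; lra.
rewrite S_INR /= IH; lra. Qed.

Lemma Rprod_const (I : finType) (P : pred I) (a : R) :
  \big[Rmult/1]_(i | P i) a = a ^ #|P|.
Proof. rewrite big_const; elim: #|P| => [|m IH] /=; first lra.
by rewrite IH. Qed.

Lemma foldr_big (T : Type) (f : T -> R) s :
  foldr Rplus 0 (map f s) = \big[Rplus/0]_(x <- s) f x.
Proof. elim: s => [|x s IH] /=; first by rewrite big_nil.
by rewrite big_cons IH. Qed.

Lemma foldr_bigM (T : Type) (f : T -> R) s :
  foldr Rmult 1 (map f s) = \big[Rmult/1]_(x <- s) f x.
Proof. elim: s => [|x s IH] /=; first by rewrite big_nil.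
by rewrite big_cons IH. Qed.

Section Prob.
Variable n : nat.
Variable p : R.
Hypothesis p0 : 0 <= p.
Hypothesis p1 : p <= 1.

Definition ew (e : 'I_n * 'I_n) (b : bool) : R :=
  if (e.1 < e.2)%nat then (if b then p else 1 - p) else (if b then 0 else 1).

Lemma weightE (g : graph n) : weight p g = \big[Rmult/1]_e ew e (g e).
Proof. rewrite /weight foldr_bigM big_enum /=.
by apply: eq_bigl => e; rewrite inE. Qed.

Lemma ew_ge0 e b : 0 <= ew e b.
Proof. rewrite /ew; case: (_ < _)%nat; case: b; lra. Qed.

Lemma weight_ge0 (g : graph n) : 0 <= weight p g.
Proof. rewrite weightE; apply: Rprod_ge0 => *; exact: ew_ge0. Qed.

Lemma gnp_probE (E : pred (graph n)) :
  gnp_prob p E = \big[Rplus/0]_g (if E g then weight p g else 0).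
Proof. rewrite /gnp_prob foldr_big big_filter big_enum_cond /= big_mkcond /=.
by apply: eq_bigr => g _; rewrite inE. Qed.

Definition canon (F : {set 'I_n * 'I_n}) := forall e, e \in F -> (e.1 < e.2)%nat.

Lemma prob_edges (F : {set 'I_n * 'I_n}) : canon F ->
  gnp_prob p (fun g => F \subset [set e | g e]) = p ^ #|F|.
Proof.
move=> cF; rewrite gnp_probE.
pose H (e : 'I_n * 'I_n) (b : bool) := if (e \in F) && ~~ b then 0 else ew e b.
transitivity (\big[Rplus/0]_(g : graph n) \big[Rmult/1]_e H e (g e)).
  apply: eq_bigr => g _; rewrite weightE.
  case: ifP => sub.
    apply: eq_bigr => e _; rewrite /H.
    case eF: (e \in F) => //=.
    by move/subsetP: sub => /(_ e eF); rewrite inE => ->.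
  have [e eF ge] : exists2 e, e \in F & g e = false.
    move/negbT: sub; case/subsetPn => e eF; rewrite inE => /negbTE; by exists e.
  rewrite (bigD1 e) //= /H eF ge /=; lra.
rewrite -(bigA_distr_bigA (fun e b => H e b)) /=.
transitivity (\big[Rmult/1]_(e : 'I_n * 'I_n) (if e \in F then p else 1)).
  apply: eq_bigr => e _; rewrite big_bool /H /ew /=.
  case eF: (e \in F) => /=.
    rewrite (cF e eF); lra.
  case: (_ < _)%nat; lra.
by rewrite -big_mkcond /= Rprod_const; congr (_ ^ _); apply: eq_card => e.
Qed.

Lemma prob_all : gnp_prob p (predT : pred (graph n)) = 1.
Proof.
have := @prob_edges set0 (fun e => ltac:(by rewrite inE)).
rewrite cards0 /= => <-; rewrite !gnp_probE; apply: eq_bigr => g _.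
by rewrite sub0set.
Qed.

Lemma prob_mono (E E' : pred (graph n)) : (forall g, E g -> E' g) ->
  gnp_prob p E <= gnp_prob p E'.
Proof. move=> H; rewrite !gnp_probE; apply: Rsum_le => g _.
case Eg: (E g); first by rewrite (H _ Eg); lra.
case: (E' g); [exact: weight_ge0 | lra]. Qed.

Lemma prob_ge0 (E : pred (graph n)) : 0 <= gnp_prob p E.
Proof. rewrite gnp_probE; apply: Rsum_ge0 => g _; case: (E g); [exact: weight_ge0|lra]. Qed.

Lemma prob_compl (E : pred (graph n)) : gnp_prob p (fun g => ~~ E g) = 1 - gnp_prob p E.
Proof. rewrite -prob_all !gnp_probE.
have -> : \big[Rplus/0]_(g : graph n) (if predT g then weight p g else 0) =
  \big[Rplus/0]_(g : graph n) ((if E g then weight p g else 0) + (if ~~ E g then weight p g else 0)).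
  apply: eq_bigr => g _ /=; case: (E g) => /=; lra.
rewrite big_split /=; lra. Qed.

Lemma prob_union (I : finType) (E : I -> pred (graph n)) :
  gnp_prob p (fun g => [exists i, E i g]) <= \big[Rplus/0]_i gnp_prob p (E i).
Proof.
rewrite gnp_probE.
have -> : \big[Rplus/0]_i gnp_prob p (E i) =
  \big[Rplus/0]_i \big[Rplus/0]_(g : graph n) (if E i g then weight p g else 0).
  by apply: eq_bigr => i _; exact: gnp_probE.
rewrite exchange_big /=; apply: Rsum_le => g _.
case: existsP => [[i Ei]|_]; last by apply: Rsum_ge0 => i _; case: (E i g); [exact: weight_ge0|lra].
apply: Rle_trans (Rsum_ge_term (F := fun i => if E i g then weight p g else 0) i _).
  by rewrite Ei; lra.
by move=> j; case: (E j g); [exact: weight_ge0|lra].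
Qed.

End Prob.

Close Scope R_scope.

Lemma adjC n (g : graph n) u v : adj g u v = adj g v u.
Proof.
rewrite /adj eq_sym; case: eqVneq => //= uv.
case: (ltngtP u v) => // /val_inj h; by rewrite h eqxx in uv.
Qed.

Lemma subset_card_exists (T : finType) (X : {set T}) d : (d <= #|X|)%nat ->
  exists D : {set T}, D \subset X /\ #|D| = d.
Proof.
move=> hd; exists [set x in take d (enum X)]; split.
  apply/subsetP => x; rewrite inE => /mem_take; by rewrite mem_enum.
rewrite cardsE (card_uniqP _) ?take_uniq ?enum_uniq //.
by rewrite size_takel // -cardE.
Qed.

Lemma connect_cross (T : finType) (r : rel T) (A : pred T) a v :
  connect r a v -> a \in A -> v \notin A -> exists x y, [/\ x \in A, y \notin A & r x y].
Proof.
case/connectP => p; elim: p a => [|z p IH] a /=; first by move=> _ -> ->.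
case/andP => raz pz lst aA vA.
case zA: (z \in A); first exact: (IH z pz lst zA vA).
by exists a, z; rewrite zA.
Qed.

Section Tree.
Variables (n : nat) (g : graph n) (u0 : 'I_n).

Definition tree_ok (xs : seq 'I_n) (ps : seq nat) :=
  [/\ uniq xs, size ps = size xs &
   forall i, (i < size xs)%nat -> (0 < i)%nat ->
     (nth 0%nat ps i < i)%nat /\ adj g (nth u0 xs i) (nth u0 xs (nth 0%nat ps i))].

Lemma tree_rcons xs ps y v : tree_ok xs ps -> y \in xs -> v \notin xs -> adj g y v ->
  tree_ok (rcons xs v) (rcons ps (index y xs)).
Proof.
case=> uxs sps H yx vx ayv; split.
- by rewrite rcons_uniq vx.
- by rewrite !size_rcons sps.
rewrite size_rcons => i; rewrite ltnS leq_eqVlt => /orP [/eqP ->|ilt] i0.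
  have yi : (index y xs < size xs)%nat by rewrite index_mem.
  rewrite !nth_rcons -sps ltnn eqxx sps yi nth_index // adjC; split => //.
have [h1 h2] := H i ilt i0.
by rewrite !nth_rcons sps ilt (leq_trans h1 (ltnW ilt)).
Qed.

Lemma tree_grow j xs ps u v : tree_ok xs ps -> u \in xs -> v \in ball g j u ->
  exists ys qs, [/\ tree_ok (xs ++ ys) (ps ++ qs), v \in xs ++ ys & (size ys <= j)%nat].
Proof.
move=> T ux; elim: j v => [|j IH] v /=.
  rewrite inE => /eqP ->; exists [::], [::]; by rewrite !cats0.
rewrite inE => /orP [vb|].
  have [ys [qs [T' vin sz]]] := IH v vb; exists ys, qs; split => //; exact: leqW.
rewrite inE => /existsP [x /andP [xb axv]].
have [ys [qs [T' xin sz]]] := IH x xb.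
case vin: (v \in xs ++ ys).
  exists ys, qs; split => //; exact: leqW.
exists (rcons ys v), (rcons qs (index x (xs ++ ys))).
rewrite -!rcons_cat; split.
- by apply: tree_rcons => //; rewrite vin.
- by rewrite mem_rcons inE eqxx.
- by rewrite size_rcons.
Qed.

Lemma tree_build (S : {set 'I_n}) m : u0 \in S ->
  induced_connected (gpow g 5) S -> (0 < m)%nat -> (m <= #|S|)%nat ->
  exists xs ps (A : {set 'I_n}),
    [/\ tree_ok xs ps, A \subset S, {subset A <= xs}, #|A| = m & (size xs <= 5 * m)%nat].
Proof.
move=> u0S conn; elim: m => [//|[|m] IH] _ hm.
  exists [:: u0], [:: 0%nat], [set u0]; split => //.
  - split => //= i; case: i => [//|i]; by rewrite ltnS leqn0.
  - by rewrite sub1set.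
  - by move=> x; rewrite inE => /eqP ->; rewrite inE.
  - by rewrite cards1.
have [xs [ps [A [T AS Ax cA sz]]]] := IH (erefl _) (ltnW hm).
have [v vS vA] : exists2 v, v \in S & v \notin A.
  apply/subsetPn; apply/negP => /subset_leq_card; rewrite cA.
  by move: hm; rewrite leqNgt => /negP.
have [a aA] : exists a, a \in A.
  have : (0 < #|A|)%nat by rewrite cA.
  by case/card_gt0P => a; exists a.
have aS : a \in S by apply: (subsetP AS).
move: conn => /forall_inP /(_ a aS) /forall_inP /(_ v vS) C.
have [x [y [xA yA rxy]]] := connect_cross C aA vA.
case/and3P: rxy => xS yS /andP [_ yb].
have [ys [qs [T' yin sz']]] := tree_grow T (Ax x xA) yb.
exists (xs ++ ys), (ps ++ qs), (y |: A); split => //.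
- by apply/subsetP => z; rewrite !inE => /orP [/eqP ->|/(subsetP AS)].
- move=> z; rewrite !inE => /orP [/eqP ->//|zA]; by rewrite mem_cat Ax.
- by rewrite cardsU1 yA cA.
- rewrite size_cat; apply: leq_trans (leq_add sz sz') _.
  by rewrite (mulnS 5 m.+1) addnC.
Qed.

End Tree.

Close Scope R_scope.

Section Wit.
Variable n : nat.

Definition cpair (u v : 'I_n) : 'I_n * 'I_n := if (u < v)%nat then (u, v) else (v, u).

Lemma cpair_canon u v : u != v -> ((cpair u v).1 < (cpair u v).2)%nat.
Proof.
rewrite /cpair => uv; case: (ltngtP u v) => //= h.
by move/val_inj: h => h; rewrite h eqxx in uv.
Qed.

Lemma cpair_eq u v u' v' : cpair u v = cpair u' v' ->
  (u = u' /\ v = v') \/ (u = v' /\ v = u').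
Proof.
rewrite /cpair; case: ifP; case: ifP => _ _ [-> ->]; by [left|right].
Qed.

Lemma adj_cpair (g : graph n) u v : adj g u v -> g (cpair u v).
Proof. by rewrite /adj /cpair => /andP [_]; case: ifP. Qed.

Definition Wit k := ({ffun 'I_k -> 'I_n} * {ffun 'I_k -> 'I_k} * {set 'I_k} * {set 'I_n * 'I_n})%type.

Definition treeE k (x : {ffun 'I_k -> 'I_n}) (par : {ffun 'I_k -> 'I_k}) : {set 'I_n * 'I_n} :=
  [set cpair (x i) (x (par i)) | i in [set i : 'I_k | (0 < i)%nat]].

Definition Inc (A : {set 'I_n}) : {set 'I_n * 'I_n} :=
  [set e : 'I_n * 'I_n | (e.1 < e.2)%nat && ((e.1 \in A) || (e.2 \in A))].

Definition valid s0 d k (w : Wit k) : bool :=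
  [&& injectiveb w.1.1.1, [forall i : 'I_k, (0 < i)%nat ==> (w.1.1.2 i < i)%nat],
      #|w.1.2| == s0, w.2 \subset Inc (w.1.1.1 @: w.1.2), #|w.2| == d &
      [disjoint w.2 & treeE w.1.1.1 w.1.1.2]].

Definition wevent s0 d k (w : Wit k) (g : graph n) : bool :=
  valid s0 d w && ((treeE w.1.1.1 w.1.1.2 :|: w.2) \subset [set e | g e]).

Lemma card_pos k : #|[set i : 'I_k | (0 < i)%nat]| = k.-1.
Proof.
case: k => [|k]; first by apply/eqP; rewrite -leqn0; apply: leq_trans (max_card _) _; rewrite card_ord.
rewrite -[in RHS](card_ord k.+1) -(cardsC1 ord0); apply: eq_card => i.
by rewrite !inE lt0n; congr negb; apply/eqP/eqP => [h|->//]; apply: val_inj.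
Qed.

Lemma treeE_prop k (x : {ffun 'I_k -> 'I_n}) (par : {ffun 'I_k -> 'I_k}) :
  injective x -> (forall i : 'I_k, (0 < i)%nat -> (par i < i)%nat) ->
  #|treeE x par| = k.-1 /\ (forall e, e \in treeE x par -> (e.1 < e.2)%nat).
Proof.
move=> ix hp; split.
  rewrite card_in_imset ?card_pos // => i j; rewrite !inE => i0 j0.
  case/cpair_eq => [[/ix //]|[/ix h1 /ix h2]].
  have := hp _ i0; have := hp _ j0; rewrite -h1 -h2 => a b.
  by have := ltn_trans a b; rewrite ltnn.
move=> e /imsetP [i]; rewrite inE => i0 ->; apply: cpair_canon.
apply/negP => /eqP /ix h; have := hp _ i0; by rewrite -h ltnn.
Qed.

End Wit.

Close Scope R_scope.

Lemma sum_bool_card (T : finType) (A : {set T}) (P : pred T) :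
  (\sum_(i in A) (P i : nat))%nat = #|[set i in A | P i]|.
Proof.
rewrite -sum1_card [RHS](eq_bigl (fun i => (i \in A) && P i)); last by move=> i; rewrite inE.
rewrite big_mkcondr /=; apply: eq_bigr => i _.
by case: (P i).
Qed.

Section Count.
Variables (n : nat) (g : graph n).

Definition Nb (a : 'I_n) : {set 'I_n * 'I_n} := [set cpair a w | w in [set w | adj g a w]].
Definition IncG (A : {set 'I_n}) := Inc A :&: [set e | g e].

Lemma card_Nb a : #|Nb a| = deg g a.
Proof.
rewrite /deg card_in_imset // => w w'; rewrite !inE => aw aw'.
case/cpair_eq => [[_ //]|[h1 h2]].
by rewrite -h1 /adj eqxx in aw'.
Qed.

Lemma Nb_sub (A : {set 'I_n}) a : a \in A -> Nb a \subset IncG A.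
Proof.
move=> aA; apply/subsetP => e /imsetP [w]; rewrite inE => aw ->.
rewrite !inE adj_cpair // andbT.
have aw' : a != w by move: aw; rewrite /adj => /andP [].
rewrite cpair_canon //= /cpair; case: ifP => _ /=; by rewrite aA ?orbT.
Qed.

Lemma Nb_end a e : e \in Nb a -> a \in [set e.1; e.2].
Proof.
case/imsetP => w _ ->; rewrite /cpair !inE; case: ifP => _ /=; by rewrite eqxx ?orbT.
Qed.

Lemma inc_count (A : {set 'I_n}) B : (forall a, a \in A -> B <= deg g a)%nat ->
  (#|A| * B <= 2 * #|IncG A|)%nat.
Proof.
move=> hB.
have e1 : (#|A| * B <= \sum_(a in A) #|Nb a|)%nat.
  rewrite -sum_nat_const; apply: leq_sum => a aA; rewrite card_Nb; exact: hB.
apply: leq_trans e1 _.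
have e2 : (\sum_(a in A) #|Nb a| = \sum_(a in A) \sum_(e in IncG A) (e \in Nb a : nat))%nat.
  apply: eq_bigr => a aA; rewrite sum_bool_card; apply: eq_card => e.
  rewrite !inE; case eN: (e \in Nb a); rewrite ?andbF ?andbT //.
  by have := subsetP (Nb_sub aA) e eN; rewrite !inE => ->.
rewrite e2 exchange_big /= mulnC -sum_nat_const; apply: leq_sum => e _.
rewrite sum_bool_card; apply: leq_trans (_ : #|[set e.1; e.2]| <= 2)%nat.
  apply: subset_leq_card; apply/subsetP => a; rewrite inE => /andP [_]; exact: Nb_end.
by rewrite cards2; case: (_ != _).
Qed.

End Count.

Close Scope R_scope.

Lemma witness_exists n (g : graph n) (S : {set 'I_n}) s0 B d :
  (0 < s0)%nat -> (s0 <= #|S|)%nat -> induced_connected (gpow g 5) S ->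
  (forall a, a \in S -> B <= deg g a)%nat ->
  (2 * (d + 5 * s0) <= s0 * B)%nat ->
  exists k : 'I_(5 * s0).+1, exists w : Wit n k, wevent s0 d w g.
Proof.
move=> s0p s0S conn hdeg hpar.
have [u0 u0S] : exists u0, u0 \in S.
  by apply/card_gt0P; apply: leq_trans s0p s0S.
have [xs [ps [A [[uxs sps Ht] AS Ax cA sz]]]] := tree_build u0S conn s0p s0S.
pose k := size xs.
have kk : (k < (5 * s0).+1)%nat by [].
exists (Ordinal kk).
pose x : {ffun 'I_k -> 'I_n} := [ffun i : 'I_k => nth u0 xs i].
pose par : {ffun 'I_k -> 'I_k} := [ffun i : 'I_k => insubd i (nth 0%nat ps i)].
pose sel : {set 'I_k} := [set i : 'I_k | x i \in A].
have ix : injective x.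
  move=> i j; rewrite !ffunE => /eqP; rewrite nth_uniq // => /eqP; exact: val_inj.
have hp : forall i : 'I_k, (0 < i)%nat -> (par i < i)%nat.
  move=> i i0; have [h1 _] := Ht i (ltn_ord i) i0.
  rewrite ffunE val_insubd (ltn_trans h1 (ltn_ord i)); exact: h1.
have xsel : x @: sel = A.
  apply/setP => a; apply/imsetP/idP => [[i]|aA]; first by rewrite inE => h ->.
  have ai : (index a xs < k)%nat by rewrite index_mem Ax.
  exists (Ordinal ai); first by rewrite inE ffunE /= nth_index ?Ax.
  by rewrite ffunE /= nth_index ?Ax.
have csel : #|sel| = s0 by rewrite -cA -xsel card_imset.
have [cT canT] := treeE_prop ix hp.
have Tg : treeE x par \subset [set e | g e].
  apply/subsetP => e /imsetP [i]; rewrite inE => i0 ->; rewrite inE.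
  apply: adj_cpair; have [h1 h2] := Ht i (ltn_ord i) i0.
  by rewrite !ffunE val_insubd (ltn_trans h1 (ltn_ord i)).
have cI : (s0 * B <= 2 * #|IncG g A|)%nat.
  rewrite -cA; apply: inc_count => a aA; apply: hdeg; exact: (subsetP AS).
pose X := IncG g A :\: treeE x par.
have cX : (d <= #|X|)%nat.
  rewrite cardsD; have := subset_leq_card (subsetIr (IncG g A) (treeE x par)).
  rewrite cT; move: sz; rewrite -/k; lia.
have [D [DX cD]] := subset_card_exists cX.
exists (x, par, sel, D); apply/andP; split.
  apply/and5P; split => /=.
  - by apply/injectiveP.
  - by apply/forallP => i; apply/implyP; exact: hp.
  - by rewrite csel.
  - rewrite xsel; apply: subset_trans DX _; apply: subset_trans (subsetDl _ _) _.
    exact: subsetIl.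
  - rewrite cD eqxx /=; rewrite disjoints_subset; apply: subset_trans DX _.
    by apply/subsetP => e; rewrite !inE => /andP [].
rewrite subUset Tg /=; apply: subset_trans DX _; apply: subset_trans (subsetDl _ _) _.
exact: subsetIr.
Qed.

Open Scope R_scope.

Lemma Rleb_true x y : Defs.Rleb x y -> x <= y.
Proof. rewrite /Defs.Rleb; by case: (Rle_dec x y). Qed.

Section B.
Variables (n : nat) (p : R).
Hypothesis p0 : 0 <= p.
Hypothesis p1 : p <= 1.

Lemma gnp_prob_ext (E E' : pred (graph n)) : (forall g, E g = E' g) ->
  gnp_prob p E = gnp_prob p E'.
Proof. move=> H; rewrite !gnp_probE; apply: eq_bigr => g _; by rewrite H. Qed.

Lemma prob_wevent s0 d k (w : Wit n k) :
  gnp_prob p (wevent s0 d w) = if valid s0 d w then p ^ (k.-1 + d) else 0.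
Proof.
case vw: (valid s0 d w).
  move: (vw) => /and5P [/injectiveP ix /forallP hp _ DI /andP [/eqP cD dis]].
  have hp' : forall i : 'I_k, (0 < i)%nat -> (w.1.1.2 i < i)%nat.
    by move=> i; have := hp i => /implyP.
  have [cT canT] := treeE_prop ix hp'.
  rewrite (@gnp_prob_ext _ (fun g => (treeE w.1.1.1 w.1.1.2 :|: w.2) \subset [set e | g e])); last first.
    by move=> g; rewrite /wevent vw.
  rewrite prob_edges //.
    rewrite cardsU cT cD; move: dis; rewrite -setI_eq0 setIC => /eqP ->; by rewrite cards0 subn0.
  move=> e; rewrite inE => /orP [/canT //|/(subsetP DI)]; by rewrite inE => /andP [].
rewrite (@gnp_prob_ext _ (fun g => false)); last by move=> g; rewrite /wevent vw.
by rewrite gnp_probE big1.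
Qed.

Lemma prob_bad_le (S0 B d : nat) :
  (0 < S0)%nat -> INR S0 <= Rpower (ln (INR n)) (7/8) -> INR B <= b0 n ->
  (2 * (d + 5 * S0) <= S0 * B)%nat ->
  gnp_prob p (fun g : graph n => [exists S : {set 'I_n}, bad_set g S]) <=
  \big[Rplus/0]_(k : 'I_(5 * S0).+1)
     (INR #|[set w : Wit n k | valid S0 d w]| * p ^ (k.-1 + d)).
Proof.
move=> s0p hL hB hpar.
have Hsub : forall g : graph n, [exists S : {set 'I_n}, bad_set g S] ->
  [exists k : 'I_(5 * S0).+1, [exists w : Wit n k, wevent S0 d w g]].
  move=> g /existsP [S /and3P [SV hS conn]].
  have s0S : (S0 <= #|S|)%nat.
    apply/leP; apply: INR_le; apply: Rle_trans (hL) _.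
    exact: Rleb_true.
  have hdeg : forall a, a \in S -> (B <= deg g a)%nat.
    move=> a /(subsetP SV); rewrite inE => /Rleb_true h.
    apply/leP; apply: INR_le; lra.
  have [k [w ev]] := witness_exists s0p s0S conn hdeg hpar.
  by apply/existsP; exists k; apply/existsP; exists w.
apply: Rle_trans (prob_mono p0 p1 Hsub) _.
apply: Rle_trans (prob_union p0 p1 _) _.
apply: Rsum_le => k _.
apply: Rle_trans (prob_union p0 p1 _) _.
have -> : \big[Rplus/0]_(w : Wit n k) gnp_prob p (wevent S0 d w) =
  \big[Rplus/0]_(w : Wit n k | valid S0 d w) p ^ (k.-1 + d).
  rewrite [RHS]big_mkcond /=; apply: eq_bigr => w _; exact: prob_wevent.
rewrite Rsum_const; right; congr (INR _ * _).
by apply: eq_card => w; rewrite inE.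
Qed.

End B.

Close Scope R_scope.

Lemma leq_pow m M d : (m <= M)%nat -> (expn m d <= expn M d)%nat.
Proof. move=> h; elim: d => // d IH; rewrite !expnS; exact: leq_mul. Qed.

Lemma ffact_le_pow m d : (m ^_ d <= expn m d)%nat.
Proof.
elim: d m => [//|d IH] m; rewrite ffactnS expnS; apply: leq_mul => //.
apply: leq_trans (IH _) _; apply: leq_pow; exact: leq_pred.
Qed.

Lemma card_setT (T : finType) : #|{set T}| = expn 2 #|T|.
Proof. by rewrite -[LHS]cardsT -powersetT card_powerset cardsT. Qed.

Lemma card_Inc n (A : {set 'I_n}) : (#|Inc A| <= 2 * #|A| * n)%nat.
Proof.
have sub : Inc A \subset setX A [set: 'I_n] :|: setX [set: 'I_n] A.
  apply/subsetP => e; rewrite !inE => /andP [_ /orP [->|->]]; by rewrite ?orbT.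
apply: leq_trans (subset_leq_card sub) _; apply: leq_trans (leq_card_setU _ _) _.
by rewrite !cardsX cardsT card_ord mul2n -addnn mulnDl mulnC.
Qed.

Lemma count_valid n s0 d k :
  (#|[set w : Wit n k | valid s0 d w]| * d`! <= expn n k * expn k k * expn 2 k * expn (2 * s0 * n) d)%nat.
Proof.
pose Q (a : {ffun 'I_k -> 'I_n} * {ffun 'I_k -> 'I_k} * {set 'I_k}) (D : {set 'I_n * 'I_n}) :=
  (#|a.2| == s0) && ((D \subset Inc (a.1.1 @: a.2)) && (#|D| == d)).
have e1 : (#|[set w : Wit n k | valid s0 d w]| <= \sum_a \sum_D (Q a D : nat))%nat.
  rewrite pair_bigA /= -sum1_card big_mkcond /=; apply: leq_sum => w _.
  rewrite inE; case vw: (valid s0 d w) => //.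
  move/and5P: vw => [_ _ h1 h2 /andP [h3 _]]; by rewrite /Q h1 h2 h3.
have e2 : forall a, ((\sum_D (Q a D : nat)) * d`! <= expn (2 * s0 * n) d)%nat.
  move=> a; rewrite /Q; case: eqP => [ha|_]; last by rewrite big1.
  have -> : (\sum_(D : {set 'I_n * 'I_n}) (true && ((D \subset Inc (a.1.1 @: a.2)) && (#|D| == d)) : nat) =
     #|[set D : {set 'I_n * 'I_n} | D \subset Inc (a.1.1 @: a.2) & #|D| == d]|)%nat.
    rewrite -sum1_card [RHS]big_mkcond /=; apply: eq_bigr => D _; rewrite inE.
    by case: (_ && _).
  rewrite cards_draws bin_ffact; apply: leq_trans (ffact_le_pow _ _) _; apply: leq_pow.
  apply: leq_trans (card_Inc _) _; rewrite -ha -!mulnA leq_mul2l /= leq_mul2r.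
  by rewrite leq_imset_card orbT.
apply: leq_trans (leq_mul e1 (leqnn _)) _.
rewrite big_distrl /=; apply: leq_trans; first by apply: leq_sum => a _; exact: e2.
rewrite sum_nat_const leq_mul2r; apply/orP; right; rewrite cardT -cardE.
by rewrite !card_prod !card_ffun !card_ord card_setT card_ord.
Qed.

Open Scope R_scope.

Lemma INR_expn a b : INR (expn a b) = INR a ^ b.
Proof. elim: b => [//|b IH]; by rewrite expnS mult_INR IH. Qed.

Lemma term_bound (n : nat) (c : R) (s0 d k : nat) : 1 <= INR n -> 0 < c ->
  (k <= 5 * s0)%nat -> (0 < s0)%nat ->
  INR (expn n k * expn k k * expn 2 k * expn (2 * s0 * n) d) / INR (d`!) *
    (c / INR n) ^ (k.-1 + d) <=
  INR n * ((c + 1) * INR (10 * s0)) ^ (5 * s0) * (2 * INR s0 * c) ^ d / INR (d`!).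
Proof.
move=> hn hc hk hs.
have hf : 0 < INR (d`!) by apply: lt_0_INR; apply/ltP; exact: fact_gt0.
have hN : 0 < INR n by lra.
rewrite !mult_INR !INR_expn pow_add !mult_INR.
have e1 : (INR 2 * INR s0 * INR n) ^ d * (c / INR n) ^ d = (2 * INR s0 * c) ^ d.
  rewrite -Rpow_mult_distr; congr (_ ^ _); rewrite /=; field; lra.
have e2 : INR n ^ k * (c / INR n) ^ k.-1 <= INR n * (c + 1) ^ (5 * s0).
  case: k hk => [|j] hk /=.
    have : 1 <= (c+1) ^ (5 * s0) by apply: pow_R1_Rle; lra.
    nra.
  have -> : INR n * INR n ^ j * (c / INR n) ^ j = INR n * c ^ j.
    rewrite /Rdiv Rpow_mult_distr -Rinv_pow; last lra.
    field; apply: pow_nonzero; lra.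
  apply: Rmult_le_compat_l; first lra.
  apply: Rle_trans (_ : (c + 1) ^ j <= _).
    apply: pow_incr; lra.
  apply: Rle_pow; first lra.
  apply/leP; apply: leq_trans hk; exact: leqnSn.
have e3 : INR k ^ k * INR 2 ^ k <= INR (10 * s0) ^ (5 * s0).
  rewrite -Rpow_mult_distr.
  have h10 : 1 <= INR (10 * s0) by apply: (le_INR 1); apply/leP; lia.
  apply: Rle_trans (_ : INR (10 * s0) ^ k <= _).
    apply: pow_incr; split.
      apply: Rmult_le_pos; apply: pos_INR.
    rewrite -mult_INR; apply: le_INR; apply/leP; lia.
  apply: Rle_pow => //; exact/leP.
have p1 : 0 <= INR k ^ k * INR 2 ^ k by apply: Rmult_le_pos; apply: pow_le; apply: pos_INR.
have p2 : 0 <= INR n ^ k * (c / INR n) ^ k.-1.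
  have : 0 <= c / INR n by apply: Rle_mult_inv_pos; lra.
  move=> h; apply: Rmult_le_pos; apply: pow_le => //; lra.
have p3 : 0 <= (2 * INR s0 * c) ^ d.
  apply: pow_le; have := pos_INR s0; nra.
apply: (Rle_trans _ ((INR n ^ k * (c / INR n) ^ k.-1) * (INR k ^ k * INR 2 ^ k) *
   (2 * INR s0 * c) ^ d / INR (d`!))).
  right; rewrite -e1; field; lra.
rewrite mult_INR in e3.
apply: Rmult_le_compat_r; first by apply: Rlt_le; apply: Rinv_0_lt_compat.
apply: Rmult_le_compat_r => //.
rewrite Rpow_mult_distr.
have p4 : 0 <= INR n * (c + 1) ^ (5 * s0) by apply: Rmult_le_pos; [lra|apply: pow_le; lra].
have := Rmult_le_compat _ _ _ _ p2 p1 e2 e3; lra.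
Qed.

Open Scope R_scope.

Lemma exp_pow_nat (y : R) (m : nat) : exp y ^ m = exp (INR m * y).
Proof.
elim: m => [|m IH]; first by rewrite /= Rmult_0_l exp_0.
by rewrite S_INR /= IH -exp_plus; congr exp; lra.
Qed.

Lemma exp_ge_lin y : 1 + y <= exp y.
Proof.
case: (Req_dec y 0) => [->|h]; first by rewrite exp_0; lra.
have := @exp_ineq1 y h; lra.
Qed.

Lemma succ_pow_le (m : nat) : (INR m + 1) ^ m <= INR m ^ m * exp 1.
Proof.
case: m => [|m]; first by rewrite /=; have := exp_ge_lin 1; lra.
set x := INR m.+1.
have hx : 0 < x by apply: lt_0_INR; lia.
have -> : x + 1 = x * (1 + / x) by field; lra.
rewrite Rpow_mult_distr; apply: Rmult_le_compat_l; first by apply: pow_le; lra.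
apply: Rle_trans (_ : exp (/ x) ^ m.+1 <= _).
  apply: pow_incr; split; last exact: exp_ge_lin.
  have := Rinv_0_lt_compat _ hx; lra.
rewrite exp_pow_nat -/x; right; congr exp; field; lra.
Qed.

Lemma fact_ge (m : nat) : INR m ^ m <= INR (m`!) * exp (INR m).
Proof.
elim: m => [|m IH]; first by rewrite /= exp_0; lra.
rewrite factS mult_INR S_INR /= exp_plus.
have h1 := succ_pow_le m.
have hm : 0 <= INR m := pos_INR m.
have he : 0 < exp 1 := exp_pos 1.
have hp : 0 <= (INR m + 1) ^ m by apply: pow_le; lra.
have : (INR m + 1) * (INR m + 1) ^ m <= (INR m + 1) * (INR m ^ m * exp 1).
  apply: Rmult_le_compat_l => //; lra.
have : (INR m + 1) * (INR m ^ m * exp 1) <= (INR m + 1) * (INR (m`!) * exp (INR m) * exp 1).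
  apply: Rmult_le_compat_l; first lra.
  apply: Rmult_le_compat_r => //; lra.
lra.
Qed.

Open Scope R_scope.

Lemma exp_le_mono x y : x <= y -> exp x <= exp y.
Proof. case=> [h|->]; [left; exact: exp_increasing|lra]. Qed.

Lemma pow_pos_le1 (x : R) (m : nat) : 1 <= x -> 1 <= x ^ m.
Proof. move=> h; exact: pow_R1_Rle. Qed.

Lemma Q1 (c x : R) (d : nat) : 0 < c -> 2 * c * exp 6 <= x -> INR d = x ^ 8 ->
  (2 * x ^ 7 * c) ^ d / INR (d`!) <= exp (- 5 * x ^ 8).
Proof.
move=> hc hx hd.
have he6 : 1 <= exp 6 by have := exp_ge_lin 6; lra.
have x0 : 0 < x by nra.
have hf : 0 < INR (d`!) by apply: lt_0_INR; apply/ltP; exact: fact_gt0.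
have hD : 0 < INR d by rewrite hd; apply: pow_lt.
have hfa := fact_ge d.
have hDd : 0 < INR d ^ d by apply: pow_lt.
have s1 : (2 * x ^ 7 * c) ^ d / INR (d`!) <= (2 * x ^ 7 * c) ^ d * exp (INR d) / INR d ^ d.
  have hp : 0 <= (2 * x ^ 7 * c) ^ d by apply: pow_le; have := pow_lt x 7 x0; nra.
  have aux : / INR (d`!) <= exp (INR d) / INR d ^ d.
    have hex : 0 < exp (INR d) := exp_pos _.
    apply: (Rmult_le_reg_r (INR (d`!) * INR d ^ d)); first nra.
    have -> : / INR (d`!) * (INR (d`!) * INR d ^ d) = INR d ^ d by field; lra.
    have -> : exp (INR d) / INR d ^ d * (INR (d`!) * INR d ^ d) = INR (d`!) * exp (INR d)
      by field; lra.
    exact: hfa.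
  have := Rmult_le_compat_l _ _ _ hp aux.
  rewrite /Rdiv => h; apply: Rle_trans h _; right; ring.
apply: Rle_trans s1 _.
have -> : (2 * x ^ 7 * c) ^ d * exp (INR d) / INR d ^ d =
   ((2 * x ^ 7 * c) / INR d) ^ d * exp (INR d).
  rewrite /Rdiv [in RHS]Rpow_mult_distr -pow_inv; ring.
rewrite hd.
have -> : 2 * x ^ 7 * c / x ^ 8 = 2 * c / x.
  by field; lra.
have r1 : 2 * c / x <= exp (-6).
  rewrite exp_Ropp; apply: (Rmult_le_reg_r (x * exp 6)); first nra.
  have -> : 2 * c / x * (x * exp 6) = 2 * c * exp 6 by field; lra.
  have -> : / exp 6 * (x * exp 6) = x by field; have := exp_pos 6; lra.
  exact: hx.
have r2 : 0 <= 2 * c / x by apply: Rle_mult_inv_pos; lra.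
apply: Rle_trans (_ : exp (-6) ^ d * exp (x ^ 8) <= _).
  apply: Rmult_le_compat_r; first exact: Rlt_le (exp_pos _).
  apply: pow_incr; lra.
rewrite exp_pow_nat -exp_plus hd; right; congr exp; ring.
Qed.

Lemma exp_ge_pow8 (y : R) : 0 <= y -> (y / 8) ^ 8 <= exp y.
Proof.
move=> hy; rewrite {2}(_ : y = INR 8 * (y / 8)); last by rewrite /=; field.
rewrite -exp_pow_nat; apply: pow_incr; split; first lra.
have := exp_ge_lin (y / 8); lra.
Qed.

Lemma Q2 (c x : R) : 0 < c -> 1 <= x -> (c + 1) * 10 * 80 ^ 8 <= x ->
  (c + 1) * (10 * x ^ 7) <= exp (x / 10).
Proof.
move=> hc hx1 hx.
have h : (x / 10 / 8) ^ 8 <= exp (x / 10) by apply: exp_ge_pow8; lra.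
apply: Rle_trans h; rewrite (_ : (x / 10 / 8) = x * / 80); last by field.
rewrite Rpow_mult_distr.
have hx7 : 0 < x ^ 7 by apply: pow_lt; lra.
have -> : x ^ 8 = x * x ^ 7 by rewrite /=; ring.
have h80 : 0 < (/ 80) ^ 8 by apply: pow_lt; lra.
have : (c + 1) * 10 <= x * (/ 80) ^ 8.
  apply: (Rmult_le_reg_r (80 ^ 8)); first by apply: pow_lt; lra.
  have e : (/ 80) ^ 8 * 80 ^ 8 = 1 by rewrite -Rpow_mult_distr Rinv_l ?pow1; lra.
  rewrite [X in _ <= X]Rmult_assoc e; lra.
nra.
Qed.

Lemma Q3 (x : R) : 8 <= x -> (x + 1) ^ 8 <= 3 * x ^ 8.
Proof.
move=> hx.
apply: Rle_trans (_ : (9/8 * x) ^ 8 <= _).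
  apply: pow_incr; lra.
rewrite Rpow_mult_distr; apply: Rmult_le_compat_r; first by apply: pow_le; lra.
rewrite /=; lra.
Qed.

Lemma asym (c : R) : 0 < c -> exists T0 : nat, forall n t : nat, (T0 <= t)%nat ->
  1 <= INR n -> INR n <= exp ((INR t + 1) ^ 8) ->
  INR (5 * expn t 7 + 1) * (INR n * ((c + 1) * INR (10 * expn t 7)) ^ (5 * expn t 7) *
    (2 * INR (expn t 7) * c) ^ (expn t 8) / INR ((expn t 8)`!)) <= exp (- INR t).
Proof.
move=> hc.
have he6 : 1 <= exp 6 by have := exp_ge_lin 6; lra.
have h80 : 1 <= 80 ^ 8 by apply: pow_R1_Rle; lra.
pose M := 2 * c * exp 6 + (c + 1) * 10 * 80 ^ 8 + 8.
have [T0 hT0] := INR_archimed 1 M Rlt_0_1.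
exists T0 => n t ht hn1 hn.
have hx : M < INR t.
  have := le_INR _ _ (elimT leP ht) ; lra.
set x := INR t in hx *.
have x8 : 8 <= x by rewrite /M in hx; nra.
have e10 : INR 10 = 10 by rewrite /=; lra.
have e5 : INR 5 = 5 by rewrite /=; lra.
have hs : INR (expn t 7) = x ^ 7 by rewrite INR_expn.
have hD : INR (expn t 8) = x ^ 8 by rewrite INR_expn.
have x7p : 1 <= x ^ 7 by apply: pow_R1_Rle; lra.
have x88 : x ^ 8 = x * x ^ 7 by rewrite /=; ring.
have ha : INR (5 * expn t 7 + 1) <= exp (x ^ 8).
  rewrite plus_INR mult_INR hs e5; have := exp_ge_lin (x ^ 8); rewrite /=; nra.
have hb : INR n <= exp (3 * x ^ 8).
  apply: Rle_trans hn _; apply: exp_le_mono; exact: Q3.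
have hcc : ((c + 1) * INR (10 * expn t 7)) ^ (5 * expn t 7) <= exp (x ^ 8 / 2).
  rewrite mult_INR hs.
  apply: Rle_trans (_ : exp (x / 10) ^ (5 * expn t 7) <= _).
    apply: pow_incr; split; first by rewrite e10; nra.
    rewrite e10; apply: Q2 => //; first lra.
    rewrite /M in hx; have := exp_pos 6; nra.
  rewrite exp_pow_nat mult_INR hs e5; right; congr exp; rewrite x88; field.
have hE : (2 * INR (expn t 7) * c) ^ (expn t 8) / INR ((expn t 8)`!) <= exp (- 5 * x ^ 8).
  rewrite hs; apply: Q1 => //.
  rewrite /M in hx; nra.
have p1 : 0 <= INR (5 * expn t 7 + 1) := pos_INR _.
have p2 : 0 <= INR n := pos_INR _.
have p3 : 0 <= ((c + 1) * INR (10 * expn t 7)) ^ (5 * expn t 7).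
  apply: pow_le; have := pos_INR (10 * expn t 7); nra.
have p4 : 0 <= (2 * INR (expn t 7) * c) ^ (expn t 8) / INR ((expn t 8)`!).
  apply: Rle_mult_inv_pos; first by apply: pow_le; have := pos_INR (expn t 7); nra.
  apply: lt_0_INR; apply/ltP; exact: fact_gt0.
have -> : INR (5 * expn t 7 + 1) * (INR n * ((c + 1) * INR (10 * expn t 7)) ^ (5 * expn t 7) *
    (2 * INR (expn t 7) * c) ^ (expn t 8) / INR ((expn t 8)`!)) =
  INR (5 * expn t 7 + 1) * INR n * ((c + 1) * INR (10 * expn t 7)) ^ (5 * expn t 7) *
    ((2 * INR (expn t 7) * c) ^ (expn t 8) / INR ((expn t 8)`!)) by rewrite /Rdiv; ring.
apply: Rle_trans (_ : exp (x ^ 8) * exp (3 * x ^ 8) * exp (x ^ 8 / 2) * exp (- 5 * x ^ 8) <= _).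
  apply: Rmult_le_compat => //.
  - apply: Rmult_le_pos => //; exact: Rmult_le_pos.
  apply: Rmult_le_compat => //; first exact: Rmult_le_pos.
  exact: Rmult_le_compat.
rewrite -!exp_plus; apply: exp_le_mono.
have : x ^ 1 <= x ^ 7 by apply: Rle_pow; [lra|apply/leP].
rewrite /= Rmult_1_r => h; have : 8 * x <= x ^ 8 by rewrite x88; nra.
lra.
Qed.

Open Scope R_scope.

Lemma floor_exists r : 0 <= r -> exists t : nat, INR t <= r < INR t + 1.
Proof.
move=> hr; have [h1 h2] := base_Int_part r.
have z0 : (0 <= Int_part r)%Z.
  have : -1 < IZR (Int_part r) by lra.
  move=> h; have := lt_IZR (-1) _ h; lia.
exists (Z.to_nat (Int_part r)).
rewrite INR_IZR_INZ Z2Nat.id //; lra.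
Qed.

Lemma pow_lt_inv (a b : R) (m : nat) : 0 <= a -> 0 <= b -> a ^ m < b ^ m -> a < b.
Proof.
move=> ha hb h; case: (Rlt_le_dec a b) => // hba.
have := pow_incr b a m (conj hb hba); lra.
Qed.

Lemma Rpower_pow_frac (l : R) (m : nat) (k : R) : 0 < l -> k * INR m = 1 * INR m * k ->
  Rpower (Rpower l k) (INR m) = Rpower l (k * INR m).
Proof. move=> hl _; by rewrite Rpower_mult. Qed.

Lemma bad_prob_small (c : R) : 0 < c -> exists T0 : nat, forall n t : nat, (T0 <= t)%nat -> (5 <= t)%nat ->
  c <= INR n -> 1 <= INR n ->
  INR t <= Rpower (ln (INR n)) (1/8) < INR t + 1 -> 0 < ln (INR n) ->
  gnp_prob (c / INR n) (fun g : graph n => [exists S : {set 'I_n}, bad_set g S]) <= exp (- INR t).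
Proof.
move=> hc; have [T0 HT0] := asym hc; exists T0 => n t hT0 ht5 hcn hn1 [hr1 hr2] hl.
set l := ln (INR n) in hr1 hr2 hl.
set r := Rpower l (1/8) in hr1 hr2.
have hr0 : 0 < r by rewrite /r /Rpower; exact: exp_pos.
have rpow : forall m : nat, r ^ m = Rpower l (1/8 * INR m).
  by move=> m; rewrite -Rpower_pow // /r Rpower_mult.
have hN : 0 < INR n by lra.
have p0 : 0 <= c / INR n by apply: Rle_mult_inv_pos; lra.
have p1 : c / INR n <= 1.
  apply: (Rmult_le_reg_r (INR n)) => //; rewrite /Rdiv Rmult_assoc Rinv_l; lra.
have ht0 : (0 < t)%nat by apply: leq_trans ht5.
have hx0 : 0 <= INR t := pos_INR t.
have hs0 : (0 < expn t 7)%nat by rewrite expn_gt0 ht0.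
have hL : INR (expn t 7) <= Rpower l (7 / 8).
  rewrite INR_expn (_ : 7 / 8 = 1/8 * INR 7); last by rewrite /=; lra.
  rewrite -rpow; apply: pow_incr; lra.
have hB : INR (expn t 2) <= b0 n.
  rewrite /b0 -/l INR_expn (_ : 1 / 4 = 1/8 * INR 2); last by rewrite /=; lra.
  rewrite -rpow; apply: pow_incr; lra.
have hpar : (2 * (expn t 8 + 5 * expn t 7) <= expn t 7 * expn t 2)%nat.
  have e8 : expn t 8 = (t * expn t 7)%nat by rewrite expnS.
  rewrite e8 -mulnDl mulnA [X in (_ <= X)%nat]mulnC leq_mul2r; apply/orP; right.
  have : (5 <= t)%nat := ht5. nia.
have := prob_bad_le p0 p1 hs0 hL hB hpar.
move=> H; apply: Rle_trans H _.
apply: Rle_trans (_ : \big[Rplus/0]_(k : 'I_(5 * expn t 7).+1)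
   (INR n * ((c + 1) * INR (10 * expn t 7)) ^ (5 * expn t 7) *
    (2 * INR (expn t 7) * c) ^ (expn t 8) / INR ((expn t 8)`!)) <= _).
  apply: Rsum_le => k _.
  have hf : 0 < INR ((expn t 8)`!) by apply: lt_0_INR; apply/ltP; exact: fact_gt0.
  have hk : (k <= 5 * expn t 7)%nat by rewrite -ltnS.
  apply: Rle_trans (@term_bound n c (expn t 7) (expn t 8) k hn1 hc hk hs0).
  apply: Rmult_le_compat_r; first by apply: pow_le.
  apply: (Rmult_le_reg_r (INR ((expn t 8)`!))) => //.
  rewrite /Rdiv Rmult_assoc Rinv_l ?Rmult_1_r; last lra.
  rewrite -mult_INR; apply: le_INR; apply/leP; exact: count_valid.
rewrite Rsum_const (_ : #|_| = (5 * expn t 7 + 1)%nat); last by rewrite cardT size_enum_ord addn1.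
apply: HT0 => //.
have : exp l = INR n by rewrite /l exp_ln.
move=> <-; apply: exp_le_mono.
have -> : l = r ^ 8 by rewrite rpow (_ : 1 / 8 * INR 8 = 1) ?Rpower_1 //; rewrite /=; lra.
apply: pow_incr; lra.
Qed.

Theorem mainTheorem7 (c : R) (hc : (0 < c)%R) :
  Un_cv (fun n : nat =>
           gnp_prob (c / INR n)%R
             (fun g : graph n => ~~ [exists S : {set 'I_n}, bad_set g S]))
        1%R.
Proof.
move=> eps heps.
have [T0 H] := bad_prob_small hc.
have [T1 hT1] := INR_archimed eps 1 heps.
pose T := maxn (maxn T0 T1) 5.
pose Y := exp ((INR T + 1) ^ 8) + c + 1.
have [N hN] := INR_archimed 1 Y Rlt_0_1.
exists N => n /leP hn.
have hnY : Y < INR n.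
  have := le_INR _ _ (elimT leP hn); lra.
have hexp := exp_pos ((INR T + 1) ^ 8).
have hN0 : 0 < INR n by rewrite /Y in hnY; lra.
have hl : (INR T + 1) ^ 8 < ln (INR n).
  rewrite -[X in X < _]ln_exp; apply: ln_increasing => //; rewrite /Y in hnY; lra.
have hT0 : 0 <= (INR T + 1) ^ 8 by apply: pow_le; have := pos_INR T; lra.
set l := ln (INR n) in hl.
have lpos : 0 < l by lra.
set r := Rpower l (1/8).
have hr0 : 0 < r by rewrite /r /Rpower; exact: exp_pos.
have r8 : r ^ 8 = l.
  by rewrite -Rpower_pow // /r Rpower_mult (_ : 1 / 8 * INR 8 = 1) ?Rpower_1 //; rewrite /=; lra.
have [t [ht1 ht2]] := floor_exists (Rlt_le _ _ hr0).
have hrT : INR T + 1 < r.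
  apply: (pow_lt_inv (m := 8)); [have := pos_INR T; lra|lra|by rewrite r8].
have hTt : (T <= t)%nat.
  apply/leP; apply: INR_le; lra.
have hP := H n t (leq_trans (leq_trans (leq_maxl _ _) (leq_maxl _ _)) hTt)
  (leq_trans (leq_maxr _ _) hTt) ltac:(rewrite /Y in hnY; lra) ltac:(rewrite /Y in hnY; lra)
  (conj ht1 ht2) lpos.
have hp0 : 0 <= c / INR n by apply: Rle_mult_inv_pos; lra.
have hp1 : c / INR n <= 1.
  apply: (Rmult_le_reg_r (INR n)) => //; rewrite /Rdiv Rmult_assoc Rinv_l; rewrite /Y in hnY; lra.
have -> : gnp_prob (c / INR n) (fun g : graph n => ~~ [exists S : {set 'I_n}, bad_set g S]) =
  1 - gnp_prob (c / INR n) (fun g : graph n => [exists S : {set 'I_n}, bad_set g S]).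
  exact: prob_compl.
have hPb := prob_ge0 hp0 hp1 (fun g : graph n => [exists S : {set 'I_n}, bad_set g S]).
rewrite /Rdist (_ : forall a, 1 - a - 1 = - a); last by move=> a; ring.
rewrite Rabs_Ropp Rabs_right; last lra.
apply: Rle_lt_trans hP _.
have hT1t : INR T1 <= INR t.
  apply: le_INR; apply/leP; apply: leq_trans hTt; rewrite /T leq_max; apply/orP; left.
  by rewrite leq_maxr.
have h1 := exp_ge_lin (INR t).
rewrite exp_Ropp; apply: (Rmult_lt_reg_r (exp (INR t))); first exact: exp_pos.
rewrite Rinv_l; last by have := exp_pos (INR t); lra.
nra.
Qed.
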